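(* Let $1\le p,q<\infty$ and $\theta>0$, and let $g:\mathbb R\to\mathbb R$ be a measurable function with compact support. Then the multiplication operator $M_g f=fg$ is bounded from $l^{q),\theta}(L^p)$ to $l^{q),\theta}(L^p)$ if and only if $g\in L^\infty(\mathbb R)$. Moreover, in that case $\|M_g\|=\|g\|_{L^\infty}$.
   Context: Index set $\mathbb Z$, $I_k=[k,k+1)$. The space $l^{q),\theta}(L^p)$ consists of complex-valued measurable $f$ on $\mathbb R$ with $f\chi_{I_k}\in L^p$ for all $k\in\mathbb Z$ and $$\|f\|_{p,q),\theta}:=\sup_{\varepsilon>0}\Big(\varepsilon^{\theta}\sum_{k\in\mathbb Z}\Big(\int_k^{k+1}|f(x)|^p\,dx\Big)^{\frac{q(1+\varepsilon)}{p}}\Big)^{\frac{1}{q(1+\varepsilon)}}<\infty.$$ $\|M_g\|$ denotes the operator norm on this space. *)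

(* Defs.v *)
From HB Require Import structures.
From mathcomp Require Import all_boot all_order all_algebra.
From mathcomp Require Import all_classical all_reals all_analysis.
From mathcomp Require complex.
From mathcomp Require Import ess_sup_inf.
Set Implicit Arguments. Unset Strict Implicit. Unset Printing Implicit Defensive.
Import Order.TTheory GRing.Theory Num.Theory.
Import numFieldNormedType.Exports.
Local Open Scope classical_set_scope.
Local Open Scope ring_scope.
Local Open Scope ereal_scope.

Section Space.
Variable R : realType.
Local Notation mu := (@lebesgue_measure R).
Local Notation C := (complex.complex R).

Definition cmod (z : C) : R := Num.sqrt (complex.Re z ^+ 2 + complex.Im z ^+ 2)%R.

Definition cmeasurable (f : R -> C) : Prop :=
  measurable_fun setT (fun x => complex.Re (f x)) /\
  measurable_fun setT (fun x => complex.Im (f x)).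

Definition Ik (k : int) : set R := `[(k%:~R : R), (k%:~R + 1)%R[%classic.

Definition loc_int (p : R) (f : R -> C) (k : int) : \bar R :=
  \int[mu]_(x in Ik k) ((cmod (f x)) `^ p)%:E.

Definition gl_norm (p q theta : R) (f : R -> C) : \bar R :=
  ereal_sup [set ((eps `^ theta)%:E *
                   \esum_(k in [set: int]) (loc_int p f k `^ (q * (1 + eps) / p)))
                  `^ (1 / (q * (1 + eps))) | eps in [set e : R | (0 < e)%R]].

Definition in_gl (p q theta : R) (f : R -> C) : Prop :=
  cmeasurable f /\ (forall k : int, loc_int p f k < +oo) /\ gl_norm p q theta f < +oo.

Definition Mg (g : R -> R) (f : R -> C) : R -> C :=
  fun x => complex.Complex (complex.Re (f x) * g x)%R (complex.Im (f x) * g x)%R.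

Definition Mg_bounded (p q theta : R) (g : R -> R) : Prop :=
  (forall f, in_gl p q theta f -> in_gl p q theta (Mg g f)) /\
  exists c : R, forall f, in_gl p q theta f ->
    gl_norm p q theta (Mg g f) <= c%:E * gl_norm p q theta f.

Definition Mg_opnorm (p q theta : R) (g : R -> R) : \bar R :=
  ereal_inf [set c%:E | c in [set c : R | (0 <= c)%R /\ forall f, in_gl p q theta f ->
    gl_norm p q theta (Mg g f) <= c%:E * gl_norm p q theta f]].

Definition Linf_norm (g : R -> R) : \bar R := ess_sup mu (fun x => (`|g x|)%:E).

End Space.

(* Main.v *)
Require Import Defs.
Set Warnings "-all".
From HB Require Import structures.
From mathcomp Require Import all_boot all_order all_algebra.
From mathcomp Require Import all_classical all_reals all_analysis.
From mathcomp Require complex.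
From mathcomp Require Import ring lra.
From mathcomp Require Import measurable_realfun ess_sup_inf.
From mathcomp Require Import zify.
Import Order.TTheory GRing.Theory Num.Theory.
Import numFieldNormedType.Exports.
Local Open Scope classical_set_scope.
Local Open Scope ring_scope.
Local Open Scope ereal_scope.

Section Aux.
Variable R : realType.
Local Notation mu := (@lebesgue_measure R).
Local Notation C := (complex.complex R).
Variables (p q theta : R).
Hypotheses (p0 : (0 < p)%R) (q0 : (0 < q)%R).

Lemma loc_int_ge0 (f : R -> C) k : 0 <= loc_int p f k.
Proof. by apply: integral_ge0 => x _; rewrite lee_fin powR_ge0. Qed.

Lemma poweR_le (x y : \bar R) (r : R) : (0 <= r)%R -> 0 <= x -> x <= y -> x `^ r <= y `^ r.
Proof.
move=> r0 x0 xy; apply: gt0_ler_poweR => //; rewrite in_itv /= ?x0 ?leey //.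
by rewrite (le_trans x0 xy).
Qed.

Lemma gl_le (f1 f2 : R -> C) (c : R) : (0 <= c)%R ->
  (forall k, loc_int p f1 k <= (c `^ p)%:E * loc_int p f2 k) ->
  gl_norm p q theta f1 <= c%:E * gl_norm p q theta f2.
Proof.
move=> c0 H.
apply: ge_ereal_sup => _ [eps /= eps0 <-].
set r := (q * (1 + eps) / p)%R.
set s := (1 / (q * (1 + eps)))%R.
have e1 : (0 < 1 + eps)%R by rewrite addr_gt0 // ltr01.
have qe : (0 < q * (1 + eps))%R by rewrite mulr_gt0.
have r0 : (0 <= r)%R by rewrite /r ltW // divr_gt0.
have s0 : (0 <= s)%R by rewrite /s ltW // divr_gt0 // ltr01.
pose S2 := \esum_(k in [set: int]) loc_int p f2 k `^ r.
apply: (@le_trans _ _ (c%:E * (((eps `^ theta)%:E * S2) `^ s))); last first.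
  apply: lee_wpmul2l; first by rewrite lee_fin.
  by apply: ereal_sup_ubound; exists eps.
pose c' := ((c `^ p) `^ r)%R.
have c'0 : (0 <= c')%R by apply: powR_ge0.
have step1 : \esum_(k in [set: int]) loc_int p f1 k `^ r <= c'%:E * S2.
  apply: le_trans (le_esum (b := fun k => c'%:E * loc_int p f2 k `^ r) _) _.
    move=> k _; rewrite /c' -poweR_EFin -poweRM ?lee_fin ?powR_ge0 ?loc_int_ge0 //.
    by apply: poweR_le; [exact: r0 | exact: loc_int_ge0 | exact: H].
  apply: ge_ereal_sup => _ [X [finX _] <-].
  rewrite -ge0_mule_fsumr; last by move=> i; apply: poweR_ge0.
  apply: lee_wpmul2l; first by rewrite lee_fin.
  by apply: esum_ge; exists X.
apply: (@le_trans _ _ (((eps `^ theta)%:E * (c'%:E * S2)) `^ s)).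
  apply: poweR_le; [exact: s0 | | ].
    apply: mule_ge0; first by rewrite lee_fin powR_ge0.
    by apply: esum_ge0 => k _; apply: poweR_ge0.
  by apply: lee_wpmul2l; [rewrite lee_fin powR_ge0 | exact: step1].
have S20 : (0 <= S2)%E by apply: esum_ge0 => k _; apply: poweR_ge0.
have -> : (eps `^ theta)%:E * (c'%:E * S2) = c'%:E * ((eps `^ theta)%:E * S2).
  by rewrite muleCA.
rewrite (@poweRM _ c'%:E ((eps `^ theta)%:E * S2) s); last 2 first.
- by rewrite lee_fin.
- by apply: mule_ge0; [rewrite lee_fin powR_ge0 | exact: S20].
rewrite poweR_EFin /c' -!powRrM.
have -> : (p * (r * s) = 1)%R.
  by rewrite /r /s; field; rewrite !gt_eqF.
by rewrite powRr1.
Qed.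


Lemma gl_pos (f : R -> C) k : 0 < loc_int p f k -> 0 < gl_norm p q theta f.
Proof.
move=> hk.
have e1 : (0 < 1 + 1 :> R)%R by rewrite addr_gt0 // ltr01.
apply: (@lt_le_trans _ _ (((1 `^ theta)%:E * \esum_(k in [set: int])
   (loc_int p f k `^ (q * (1 + 1) / p))) `^ (1 / (q * (1 + 1))))); last first.
  by apply: ereal_sup_ubound; exists 1%R => //=; rewrite ltr01.
apply: poweR_gt0; rewrite powR1 /= mul1e.
apply: (@lt_le_trans _ _ (loc_int p f k `^ (q * (1 + 1) / p))).
  exact: poweR_gt0.
apply: esum_ge; exists [set k].
  by split; [exact: finite_set1 | by []].
by rewrite fsbig_set1.
Qed.

Lemma gl_fin (f : R -> C) k0 : (1 <= q)%R -> (0 < theta)%R ->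
  (forall j, j != k0 -> loc_int p f j = 0) -> loc_int p f k0 <= 1 ->
  gl_norm p q theta f <= (expR theta)%:E.
Proof.
move=> q1 th0 H0 H1.
apply: ge_ereal_sup => _ [eps /= eps0 <-].
set r := (q * (1 + eps) / p)%R.
set s := (1 / (q * (1 + eps)))%R.
have e1 : (0 < 1 + eps)%R by rewrite addr_gt0 // ltr01.
have qe : (0 < q * (1 + eps))%R by rewrite mulr_gt0.
have r0 : (0 < r)%R by rewrite /r divr_gt0.
have s0 : (0 <= s)%R by rewrite /s ltW // divr_gt0 // ltr01.
have hes : \esum_(k in [set: int]) loc_int p f k `^ r <= 1.
  rewrite (eq_esum (b := fun j => if j \in [set k0] then loc_int p f j `^ r else 0)); last first.
    move=> j _; case: ifPn => // jk.
    have jk' : j != k0 by apply: contraNneq jk => ->; rewrite inE.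
    by rewrite H0 // poweR0r // gt_eqF.
  rewrite -esum_mkcond esum_set1; last exact: poweR_ge0.
  rewrite -(poweR1r r); apply: poweR_le; [exact: ltW | exact: loc_int_ge0 | exact: H1].
apply: (@le_trans _ _ (((eps `^ theta)%:E * 1) `^ s)).
  apply: poweR_le; [exact: s0 | | ].
    apply: mule_ge0; first by rewrite lee_fin powR_ge0.
    by apply: esum_ge0 => k _; apply: poweR_ge0.
  by apply: lee_wpmul2l; [rewrite lee_fin powR_ge0 | exact: hes].
rewrite mule1 poweR_EFin -powRrM lee_fin.
rewrite /powR gt_eqF // ler_expR.
have hl : (ln eps <= eps)%R.
  have := @le_ln1Dx R (eps - 1)%R.
  rewrite addrCA subrr addr0 => h.
  apply: le_trans (h _) _; lra.
have hse : (s * eps <= 1)%R.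
  rewrite /s mul1r mulrC ler_pdivrMr // mul1r.
  nra.
have ts0 : (0 <= theta * s)%R by rewrite mulr_ge0 // ltW.
apply: (@le_trans _ _ (theta * s * eps)%R); first by rewrite ler_wpM2l.
by rewrite -mulrA ler_piMr // ltW.
Qed.


Lemma cmod_meas {f : R -> C} : cmeasurable f -> measurable_fun setT (fun x => cmod (f x)).
Proof.
case=> hre him.
have -> : (fun x => cmod (f x)) =
    (fun x => (complex.Re (f x) ^+ 2 + complex.Im (f x) ^+ 2) `^ (2^-1))%R.
  by apply/funext => x; rewrite /cmod powR12_sqrt // addr_ge0 // sqr_ge0.
apply: (measurableT_comp (measurable_powR _)).
by apply: measurable_funD; apply: measurable_funX.
Qed.

Lemma integrand_meas (f : R -> C) (D : set R) : cmeasurable f ->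
  measurable_fun D (fun x => ((cmod (f x)) `^ p)%:E).
Proof.
move=> hf; apply: measurable_funTS; apply/measurable_EFinP.
exact: (measurableT_comp (measurable_powR p) (cmod_meas hf)).
Qed.

Lemma cmod_Mg (g : R -> R) (f : R -> C) x : cmod (Mg g f x) = (cmod (f x) * `|g x|)%R.
Proof.
rewrite /cmod /Mg /= !exprMn -mulrDl sqrtrM ?sqrtr_sqr //.
by apply: addr_ge0; apply: sqr_ge0.
Qed.

Lemma cmeas_Mg (g : R -> R) (f : R -> C) : measurable_fun setT g -> cmeasurable f ->
  cmeasurable (Mg g f).
Proof. by move=> mg [h1 h2]; split; apply: measurable_funM. Qed.

Lemma Ik_meas k : measurable (@Ik R k).
Proof. exact: measurable_itv. Qed.

Lemma loc_Mg_le (g : R -> R) (f : R -> C) (c : R) k :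
  cmeasurable f -> measurable_fun setT g -> (0 <= c)%R ->
  (\forall x \ae mu, (`|g x|)%:E <= c%:E) ->
  loc_int p (Mg g f) k <= (c `^ p)%:E * loc_int p f k.
Proof.
move=> hf mg c0 hae.
rewrite /loc_int -ge0_integralZl_EFin; last 4 first.
- exact: Ik_meas.
- by move=> x _; rewrite lee_fin powR_ge0.
- exact: integrand_meas.
- exact: powR_ge0.
apply: ae_ge0_le_integral.
- exact: Ik_meas.
- by move=> x _; rewrite lee_fin powR_ge0.
- exact: (integrand_meas _ _ (cmeas_Mg _ _ mg hf)).
- by move=> x _; rewrite mule_ge0 // lee_fin powR_ge0.
- apply: emeasurable_funM; first exact: measurable_cst.
  exact: integrand_meas.
case: hae => N [mN N0 sub]; exists N; split => // x /= hx'; apply: sub => hx.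
apply: hx' => _.
rewrite cmod_Mg powRM ?normr_ge0 //; last by rewrite sqrtr_ge0.
rewrite -EFinM lee_fin mulrC ler_wpM2r //; first exact: powR_ge0.
by apply: ge0_ler_powR; rewrite ?nnegrE ?normr_ge0 // ?(ltW p0) // -lee_fin.
Qed.


Definition ind (E : set R) : R -> C := fun x => complex.Complex (\1_E x) 0%R.

Lemma pow_ind E x : ((cmod (ind E x)) `^ p)%R = \1_E x.
Proof.
rewrite /cmod /ind /= expr0n /= addr0 sqrtr_sqr indicE.
case: (x \in E); rewrite /= ?normr1 ?normr0 ?powR1 //.
by rewrite powR0 // gt_eqF.
Qed.

Lemma loc_ind E k : measurable E -> loc_int p (ind E) k = mu (E `&` @Ik R k).
Proof.
move=> mE; rewrite /loc_int.
transitivity (\int[mu]_(x in @Ik R k) (\1_E x)%:E).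
  by apply: eq_integral => x _; rewrite pow_ind.
by rewrite integral_indic //; exact: Ik_meas.
Qed.

Lemma Ik_disj j k x : @Ik R j x -> @Ik R k x -> j = k.
Proof.
rewrite /Ik /= !in_itv /= => /andP[a b] /andP[c d].
have h1 : (j%:~R < (k + 1)%:~R :> R)%R by rewrite intrD; apply: le_lt_trans a d.
have h2 : (k%:~R < (j + 1)%:~R :> R)%R by rewrite intrD; apply: le_lt_trans c b.
rewrite ltr_int in h1; rewrite ltr_int in h2.
lia.
Qed.

Lemma Ik_mu k : mu (@Ik R k) = 1.
Proof.
rewrite /Ik lebesgue_measure_itv /= lte_fin ltrDl ltr01 -EFinB.
by congr EFin; lra.
Qed.

Lemma Ik_floor x : @Ik R (Num.floor x) x.
Proof.
rewrite /Ik /= in_itv /= floor_le /=.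
by have := real_floorD1_gt (num_real x); rewrite intrD.
Qed.


Lemma lower (g : R -> R) (N c : R) (E : set R) k0 :
  (1 <= q)%R -> (0 < theta)%R ->
  measurable_fun setT g -> (0 < N)%R -> measurable E -> E `<=` @Ik R k0 ->
  (forall x, E x -> N < `|g x|)%R -> 0 < mu E ->
  (forall f, in_gl p q theta f ->
     gl_norm p q theta (Mg g f) <= c%:E * gl_norm p q theta f) ->
  (N <= c)%R.
Proof.
move=> q1 th0 mg N0 mE EI hE muE hb.
pose f := ind E.
have hk0 : loc_int p f k0 = mu E by rewrite loc_ind // setIidl.
have hj : forall j, j != k0 -> loc_int p f j = 0.
  move=> j jk; rewrite loc_ind //.
  have -> : E `&` @Ik R j = set0.
    apply/seteqP; split => x // [/EI xk xj].
    by move/negP: jk; apply; apply/eqP; exact: Ik_disj xj xk.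
  exact: measure0.
have hle : loc_int p f k0 <= 1.
  rewrite hk0 -(Ik_mu k0); apply: le_measure; [by rewrite inE | | exact: EI].
  by rewrite inE; exact: Ik_meas.
have cmf : cmeasurable f.
  by split; rewrite /f /ind /=; [apply: measurable_indic | apply: measurable_cst].
have inf : in_gl p q theta f.
  split; first exact: cmf.
  split.
    move=> k; case: (eqVneq k k0) => [->|kk].
      by apply: le_lt_trans hle _; rewrite ltry.
    by rewrite hj // ltry.
  by apply: le_lt_trans (gl_fin f k0 q1 th0 hj hle) _; rewrite ltry.
have G0 : 0 < gl_norm p q theta f by apply: (gl_pos f k0); rewrite hk0.
have Gfin : gl_norm p q theta f < +oo by case: inf => _ [].
have hlow : gl_norm p q theta f <= (N^-1)%:E * gl_norm p q theta (Mg g f).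
  apply: gl_le; first by rewrite invr_ge0 ltW.
  move=> k; rewrite /loc_int -ge0_integralZl_EFin; last 4 first.
  - exact: Ik_meas.
  - by move=> x _; rewrite lee_fin powR_ge0.
  - exact: (integrand_meas _ _ (cmeas_Mg _ _ mg cmf)).
  - exact: powR_ge0.
  apply: ge0_le_integral.
  - exact: Ik_meas.
  - by move=> x _; rewrite lee_fin powR_ge0.
  - exact: integrand_meas.
  - apply: emeasurable_funM; first exact: measurable_cst.
    exact: (integrand_meas _ _ (cmeas_Mg _ _ mg cmf)).
  move=> x _; rewrite cmod_Mg powRM ?normr_ge0 ?sqrtr_ge0 // -EFinM lee_fin /f pow_ind.
  rewrite indicE; case: (boolP (x \in E)) => xE /=; last by rewrite !mul0r mulr0.
  rewrite mul1r -powRM; last 2 first.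
  - by rewrite invr_ge0 ltW.
  - exact: normr_ge0.
  apply: (@le_trans _ _ (1 `^ p)%R); first by rewrite powR1.
  apply: ge0_ler_powR; rewrite ?nnegrE ?(ltW p0) ?ler01 //.
    by rewrite mulr_ge0 // invr_ge0 ltW.
  rewrite mulrC ler_pdivlMr // mul1r; apply: ltW; apply: hE.
  by rewrite -inE.
have hup := hb f inf.
have hG : gl_norm p q theta f = (fine (gl_norm p q theta f))%:E.
  by rewrite fineK // ge0_fin_numE // ltW.
have G0' : (0 < fine (gl_norm p q theta f))%R by rewrite -lte_fin -hG.
have := le_trans hlow (lee_wpmul2l _ hup).
rewrite hG -!EFinM lee_fin => h.
have {}h := h (ltW (eq_ind_r is_true N0 (invr_gt0 N))).

set G := fine _ in h G0'.
have NN : (N * N^-1 = 1)%R by rewrite divff // gt_eqF.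
have : (N * G <= c * G)%R.
  by apply: le_trans (ler_wpM2l (ltW N0) h) _; rewrite mulrA NN mul1r.
by rewrite ler_pM2r.
Qed.


Lemma ae_bound (g : R -> R) (c : R) :
  ess_sup mu (fun x => (`|g x|)%:E) <= c%:E ->
  \forall x \ae mu, (`|g x|)%:E <= c%:E.
Proof.
move=> Lc; case: (ess_sup_ge mu (fun x => (`|g x|)%:E)) => M [mM M0 sub].
exists M; split => // x /= hx; apply: sub => /= h'; apply: hx.
exact: le_trans h' Lc.
Qed.

Lemma mA_lemma (g : R -> R) (N : R) : measurable_fun setT g ->
  measurable [set x | (N < `|g x|)%R].
Proof.
move=> mg.
have mn : measurable_fun setT (fun x => `|g x|)%R.
  by apply: measurableT_comp; [exact: normr_measurable | exact: mg].
have -> : [set x | (N < `|g x|)%R] = setT `&` (fun x => `|g x|)%R @^-1` `]N, +oo[%classic.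
  apply/seteqP; split => x /=.
  - by move=> h; split => //; rewrite in_itv /= andbT.
  - by case=> _; rewrite in_itv /= andbT.
by apply: mn; last exact: measurable_itv.
Qed.

Lemma pos_piece (g : R -> R) (N : R) : measurable_fun setT g ->
  N%:E < ess_sup mu (fun x => (`|g x|)%:E) ->
  exists k0, 0 < mu ([set x | N < `|g x|]%R `&` @Ik R k0).
Proof.
move=> mg hlt; apply: contrapT => hno.
pose A := [set x | (N < `|g x|)%R].
have mA : measurable A.
  have mn : measurable_fun setT (fun x => `|g x|)%R.
    by apply: measurableT_comp; [exact: normr_measurable | exact: mg].
  have -> : A = setT `&` (fun x => `|g x|)%R @^-1` `]N, +oo[%classic.
    apply/seteqP; split => x /=.
    - by move=> h; split => //; rewrite in_itv /= andbT.
    - by case=> _; rewrite in_itv /= andbT.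
  by apply: mn; last exact: measurable_itv.
have h0 : forall k, mu (A `&` @Ik R k) = 0.
  move=> k; apply/eqP; rewrite eq_le measure_ge0 andbT leNgt; apply/negP => hk.
  by apply: hno; exists k.
have negk : forall k, mu.-negligible (A `&` @Ik R k).
  move=> k; exists (A `&` Ik k); split => //.
  by apply: measurableI => //; exact: Ik_meas.
have negA : mu.-negligible A.
  pose F := fun n : nat => (A `&` @Ik R (Posz n)) `|` (A `&` @Ik R (Negz n)).
  have hF : mu.-negligible (\bigcup_n F n).
    by apply: negligible_bigcup => n; apply: negligibleU; exact: negk.
  apply: negligibleS hF => x Ax; have := Ik_floor x.
  case: (Num.floor x) => n hn; exists n => //.
  - by left.
  - by right.
have : ess_sup mu (fun x => (`|g x|)%:E) <= N%:E.
  apply/ess_supP; apply: (negligibleS _ negA) => x /= hx.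
  by rewrite /A /= ltNge -lee_fin; apply/negP.
by move=> h; have := lt_le_trans hlt h; rewrite ltxx.
Qed.


Lemma main_aux (g : R -> R) : (1 <= q)%R -> (0 < theta)%R ->
  measurable_fun [set: R] g ->
  (Mg_bounded p q theta g <-> Linf_norm g < +oo) /\
  (Mg_bounded p q theta g -> Mg_opnorm p q theta g = Linf_norm g).
Proof.
move=> q1 th0 mg.
have LE : Linf_norm g = ess_sup mu (fun x => (`|g x|)%:E) by [].
have muT : 0 < mu [set: R].
  apply: (@lt_le_trans _ _ (mu (@Ik R 0))); first by rewrite Ik_mu lte01.
  by apply: le_measure; rewrite ?inE //; exact: Ik_meas.
have L0 : 0 <= Linf_norm g.
  rewrite LE; apply: ess_sup_gee => //.
  exists set0; split; [by [] | by rewrite measure0 | ].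
  by move=> x /= h; exfalso; apply: h; rewrite lee_fin normr_ge0.
have key : forall c, (forall f, in_gl p q theta f ->
     gl_norm p q theta (Mg g f) <= c%:E * gl_norm p q theta f) ->
    forall N, (0 < N)%R -> N%:E < Linf_norm g -> (N <= c)%R.
  move=> c hb N N0 hNL; have [k0 hk] := pos_piece g N mg hNL.
  apply: (lower g N c ([set x | N < `|g x|]%R `&` @Ik R k0) k0 q1 th0 mg N0 _ _ _ hk hb).
  - by apply: measurableI; [exact: mA_lemma | exact: Ik_meas].
  - by move=> x [].
  - by move=> x [].
have fwd : Mg_bounded p q theta g -> Linf_norm g < +oo.
  case=> _ [c hb]; rewrite ltNge leye_eq; apply/negP => /eqP Ly.
  have h1 := normr_ge0 c; have h2 := ler_norm c.
  have hN : (0 < `|c| + 1)%R by lra.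
  have hNL : (`|c| + 1)%:E < Linf_norm g by rewrite Ly ltry.
  have := key c hb _ hN hNL; lra.
have bnd : forall c, (0 <= c)%R -> Linf_norm g <= c%:E ->
    forall f, in_gl p q theta f ->
    gl_norm p q theta (Mg g f) <= c%:E * gl_norm p q theta f.
  move=> c c0 Lc f [cf _]; apply: gl_le => // k.
  by apply: loc_Mg_le => //; apply: ae_bound.
have Lfin : Linf_norm g < +oo -> Linf_norm g = (fine (Linf_norm g))%:E.
  by move=> Lf; rewrite fineK // ge0_fin_numE.
have bwd : Linf_norm g < +oo -> Mg_bounded p q theta g.
  move=> Lf; have hL := Lfin Lf; set c := fine (Linf_norm g) in hL.
  have c0 : (0 <= c)%R by rewrite -lee_fin -hL.
  have hb : forall f, in_gl p q theta f -> gl_norm p q theta (Mg g f) <= c%:E * gl_norm p q theta f.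
    by apply: bnd => //; rewrite hL.
  split; last by exists c.
  move=> f hf; have [cf [hl hg]] := hf.
  split; first exact: cmeas_Mg.
  split.
    move=> k; apply: le_lt_trans (loc_Mg_le g f c k cf mg c0 _) _.
      by apply: ae_bound; rewrite -hL.
    by apply: lte_mul_pinfty; [rewrite lee_fin powR_ge0 | by [] | exact: hl].
  apply: le_lt_trans (hb f hf) _.
  by apply: lte_mul_pinfty; [rewrite lee_fin | by [] | exact: hg].
split; first by split; [exact: fwd | exact: bwd].
move=> hbd; have hL := Lfin (fwd hbd); set c := fine (Linf_norm g) in hL.
have c0 : (0 <= c)%R by rewrite -lee_fin -hL.
apply/eqP; rewrite eq_le; apply/andP; split.
  rewrite hL; apply: ereal_inf_lbound; exists c => //; split => //.
  by apply: bnd => //; rewrite hL.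
apply: le_ereal_inf_tmp => _ [d [d0 hd] <-].
rewrite hL lee_fin leNgt; apply/negP => hdc.
have hN : (0 < (d + c) / 2)%R by lra.
have hNL : ((d + c) / 2)%:E < Linf_norm g by rewrite hL lte_fin; lra.
have := key d hd _ hN hNL; lra.
Qed.

End Aux.

Theorem theorem4p1 (R : realType) (p q theta : R) (g : R -> R)
  (hp : (1 <= p)%R) (hq : (1 <= q)%R) (htheta : (0 < theta)%R)
  (gmeas : measurable_fun [set: R] g)
  (gcpt : exists M : R, forall x : R, (M < `|x|)%R -> g x = 0%R) :
  (Mg_bounded p q theta g <-> Linf_norm g < +oo) /\
  (Mg_bounded p q theta g -> Mg_opnorm p q theta g = Linf_norm g).
Proof.
have p0 : (0 < p)%R by apply: lt_le_trans ltr01 hp.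
have q0 : (0 < q)%R by apply: lt_le_trans ltr01 hq.
exact: (@main_aux R p q theta p0 q0 g hq htheta gmeas).
Qed.
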